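(* Let $G$ be an optimal digraph with $\beta_G > \alpha_G$. For every augmenting sequence $v_1, f_1, v_2, f_2, \dots, f_k, v_{k+1}$ in $G$, we have $v_i \neq v_j$ for all $i \neq j$, except possibly $v_{k+1} = v_1$.
   Context: Digraphs are finite, loopless, with at most one edge $uv$ per ordered pair. A digraph is $2$-free if no distinct $u,v$ have both $uv,vu$ as edges. A circular interval digraph is a digraph together with a fixed arrangement of its vertices in a circle such that for all distinct $u,v,w$ in clockwise order with $uw\in E(G)$, also $uv,vw\in E(G)$. For distinct $u,v$, $d(u,v) = 1 + |\{w: u,w,v \text{ distinct, in clockwise order}\}|$; this is the length of the ordered pair $uv$. A non-edge is an ordered pair $(u,v)$ of distinct vertices with neither $uv$ nor $vu$ an edge; its length is $d(u,v)$. $\alpha_G$ is the minimum length of a non-edge ($\infty$ if none) and $\beta_G$ the maximum length of an edge ($0$ if none). A longest edge is an edge of length $\beta_G$; a shortest non-edge is a non-edge of length $\alpha_G$; an extreme pair is a longest edge or a shortest non-edge. An alternating sequence is a sequence $v_1,f_1,v_2,\dots,f_k,v_{k+1}$ ($k\ge1$) of vertices $v_i$ and extreme pairs $f_i=(v_i,v_{i+1})$ such that the $f_i$ are pairwise distinct, and for $1\le i\le k-1$, if $f_i$ is an edge then $f_{i+1}$ is a non-edge, and if $f_i$ is a non-edge then $f_{i+1}$ is an edge. An augmenting sequence is a maximal alternating sequence (one that cannot be extended at either end to a longer alternating sequence). $\xi(G)$ is the number of pairs $(uv,(w,x))$ with $uv\in E(G)$, $(w,x)$ a non-edge, $d(u,v)>d(w,x)$.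 $\tilde P_3(G)$ is the number of triples $(a,b,c)$ of distinct vertices with $ab,bc\in E(G)$ and $ac,ca\notin E(G)$. For fixed $n\ge 4$, $G$ is optimal if it is a $2$-free circular interval digraph on $n$ vertices maximizing $\tilde P_3$ among all such digraphs and, subject to this, minimizing $\xi(G)$. *)

(* Defs.v *)
From mathcomp Require Import all_boot.
Set Implicit Arguments. Unset Strict Implicit. Unset Printing Implicit Defensive.

(* Vertices are 'I_n, arranged in the circle in the order 0,1,...,n-1
   (clockwise = increasing index mod n).  A digraph is a relation E. *)

(* d(u,v) = 1 + #{w : u,w,v distinct in clockwise order} = (v - u) mod n *)
Definition dist (n : nat) (u v : 'I_n) : nat := (v + n - u) %% n.

Definition loopless (n : nat) (E : rel 'I_n) : Prop := forall u, ~~ E u u.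

Definition two_free (n : nat) (E : rel 'I_n) : Prop :=
  forall u v, u != v -> ~~ (E u v && E v u).

(* u, v, w distinct and in clockwise order  <->  d(u,v) < d(u,w) *)
Definition cw_order (n : nat) (u v w : 'I_n) : bool :=
  [&& u != v, v != w, u != w & dist u v < dist u w].

Definition circ_interval (n : nat) (E : rel 'I_n) : Prop :=
  forall u v w, cw_order u v w -> E u w -> E u v && E v w.

Definition is_cid (n : nat) (E : rel 'I_n) : Prop :=
  [/\ loopless E, two_free E & circ_interval E].

Definition nonedge (n : nat) (E : rel 'I_n) (u v : 'I_n) : bool :=
  [&& u != v, ~~ E u v & ~~ E v u].

(* maximum length of an edge, 0 if none *)
Definition beta (n : nat) (E : rel 'I_n) : nat :=
  \max_(p : 'I_n * 'I_n | E p.1 p.2) dist p.1 p.2.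

(* minimum length of a non-edge; n plays the role of infinity
   (every length is < n) *)
Definition alpha (n : nat) (E : rel 'I_n) : nat :=
  \big[minn/n]_(p : 'I_n * 'I_n | nonedge E p.1 p.2) dist p.1 p.2.

Definition longest_edge (n : nat) (E : rel 'I_n) (u v : 'I_n) : bool :=
  E u v && (dist u v == beta E).

Definition shortest_nonedge (n : nat) (E : rel 'I_n) (u v : 'I_n) : bool :=
  nonedge E u v && (dist u v == alpha E).

Definition extreme (n : nat) (E : rel 'I_n) (u v : 'I_n) : bool :=
  longest_edge E u v || shortest_nonedge E u v.

(* the pairs f_i = (v_i, v_{i+1}) of a vertex sequence *)
Definition seq_pairs (n : nat) (s : seq 'I_n) : seq ('I_n * 'I_n) :=
  zip s (behead s).

Definition alt_step (n : nat) (E : rel 'I_n) (p q : 'I_n * 'I_n) : bool :=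
  (E p.1 p.2 ==> nonedge E q.1 q.2) && (nonedge E p.1 p.2 ==> E q.1 q.2).

(* alternating sequence v_1, f_1, ..., f_k, v_{k+1} (k >= 1) given by
   its vertex list s = [v_1; ...; v_{k+1}]; [sorted r] checks r on every
   pair of consecutive items *)
Definition alternating (n : nat) (E : rel 'I_n) (s : seq 'I_n) : bool :=
  [&& 2 <= size s,
      all (fun p => extreme E p.1 p.2) (seq_pairs s),
      uniq (seq_pairs s) &
      sorted (alt_step E) (seq_pairs s)].

(* maximal alternating sequence: cannot be extended at either end *)
Definition augmenting (n : nat) (E : rel 'I_n) (s : seq 'I_n) : Prop :=
  [/\ alternating E s,
      (forall x, ~~ alternating E (x :: s)) &
      (forall x, ~~ alternating E (rcons s x))].

Definition P3t (n : nat) (E : rel 'I_n) : nat :=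
  #|[pred t : 'I_n * 'I_n * 'I_n |
      [&& t.1.1 != t.1.2, t.1.2 != t.2, t.1.1 != t.2,
          E t.1.1 t.1.2, E t.1.2 t.2, ~~ E t.1.1 t.2 & ~~ E t.2 t.1.1]]|.

Definition xi (n : nat) (E : rel 'I_n) : nat :=
  #|[pred q : ('I_n * 'I_n) * ('I_n * 'I_n) |
      [&& E q.1.1 q.1.2, nonedge E q.2.1 q.2.2 &
          dist q.2.1 q.2.2 < dist q.1.1 q.1.2]]|.

Definition optimal (n : nat) (E : rel 'I_n) : Prop :=
  [/\ is_cid E,
      (forall E' : rel 'I_n, is_cid E' -> P3t E' <= P3t E) &
      (forall E' : rel 'I_n, is_cid E' -> P3t E' = P3t E -> xi E <= xi E')].

(* Main.v *)
Require Import Defs.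
From mathcomp Require Import all_boot zify.
Set Implicit Arguments. Unset Strict Implicit. Unset Printing Implicit Defensive.

Lemma distE n (u v : 'I_n) : dist u v = if u <= v then v - u else v + n - u.
Proof.
rewrite /dist; have hu := ltn_ord u; have hv := ltn_ord v.
case: leqP => h.
  have -> : v + n - u = (v - u) + n by lia.
  by rewrite modnDr modn_small //; lia.
by rewrite modn_small //; lia.
Qed.

Lemma dist_self n (u : 'I_n) : dist u u = 0.
Proof. by rewrite distE leqnn subnn. Qed.

Lemma dist_inj_r n (u v w : 'I_n) : dist u v = dist u w -> v = w.
Proof.
rewrite !distE => h; apply: val_inj => /=.
have := ltn_ord u; have := ltn_ord v; have := ltn_ord w.
move: h; case: (leqP u v); case: (leqP u w); lia.
Qed.

Lemma dist_inj_l n (u v w : 'I_n) : dist u v = dist w v -> u = w.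
Proof.
rewrite !distE => h; apply: val_inj => /=.
have := ltn_ord u; have := ltn_ord v; have := ltn_ord w.
move: h; case: (leqP u v); case: (leqP w v); lia.
Qed.

Lemma factT n (E : rel 'I_n) (v w x : 'I_n) : circ_interval E ->
  E v w -> nonedge E v x -> dist v x < dist v w -> False.
Proof.
move=> Hci Evw /and3P[vx nEvx _] hd.
have vw : v != w.
  by apply/eqP => e; move: hd; rewrite e dist_self ltn0.
have xw : x != w by apply/eqP => e; move: hd; rewrite e ltnn.
have := Hci v x w; rewrite /cw_order vx xw vw hd => /(_ isT Evw) /andP[h _].
by rewrite h in nEvx.
Qed.

Lemma factH n (E : rel 'I_n) (u v y : 'I_n) : circ_interval E ->
  E u v -> nonedge E y v -> 0 < dist y v < dist u v -> False.
Proof.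
move=> Hci Euv /and3P[yv nEyv _] /andP[h0 hd].
have uy : u != y by apply/eqP => e; move: hd; rewrite e ltnn.
have uv : u != v.
  by apply/eqP => e; move: hd; rewrite e dist_self ltn0.
have hd' : dist u y < dist u v.
  move: h0 hd; rewrite !distE.
  have := ltn_ord u; have := ltn_ord v; have := ltn_ord y.
  move: uy yv uv; rewrite -!(inj_eq val_inj) /=.
  case: (leqP u v); case: (leqP y v); case: (leqP u y); lia.
have := Hci u y v; rewrite /cw_order uy yv uv hd' => /(_ isT Euv) /andP[_ h].
by rewrite h in nEyv.
Qed.

Lemma dist_pos n (u v : 'I_n) : u != v -> 0 < dist u v.
Proof.
rewrite distE -(inj_eq val_inj) /=; have := ltn_ord u; have := ltn_ord v.
case: (leqP u v); lia.
Qed.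

Lemma alpha_pos n (E : rel 'I_n) (x0 : 'I_n) : 0 < alpha E.
Proof.
rewrite /alpha; apply: (big_ind (fun x => 0 < x)).
- by case: x0 => m /=; lia.
- by move=> x y; lia.
- by move=> p /and3P[h _ _]; apply: dist_pos.
Qed.

Lemma sorted_nth_rel T (r : rel T) (d : T) (l : seq T) :
  sorted r l -> forall t, t.+1 < size l -> r (nth d l t) (nth d l t.+1).
Proof.
elim: l => [|a l IH] //= Hs [|t] /=.
  by case: l Hs {IH} => [|b l] //= /andP[].
move=> Ht; apply: IH; last by [].
by case: l Hs {Ht} => [|b l] //= /andP[].
Qed.

Lemma nth_sp n (s : seq 'I_n) x0 t : t.+1 < size s ->
  nth (x0, x0) (seq_pairs s) t = (nth x0 s t, nth x0 s t.+1).
Proof.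
move=> h; rewrite /seq_pairs nth_zip_cond size_zip size_behead.
have -> : t < minn (size s) (size s).-1 by lia.
by rewrite nth_behead.
Qed.

Lemma size_sp n (s : seq 'I_n) : size (seq_pairs s) = (size s).-1.
Proof. rewrite /seq_pairs size_zip size_behead; lia. Qed.

Section Key.
Variables (n : nat) (E : rel 'I_n) (s : seq 'I_n) (x0 : 'I_n).
Hypothesis Hci : circ_interval E.
Hypothesis Hab : alpha E < beta E.
Hypothesis Halt : alternating E s.
Local Notation "'sv[' t ']'" := (nth x0 s t) (at level 0).

Lemma ext_t t : t.+1 < size s -> extreme E sv[t] sv[t.+1].
Proof.
move=> h; case/and4P: Halt => _ /allP Hall _ _.
have := Hall _ (mem_nth (x0, x0) (_ : t < size (seq_pairs s))).
rewrite nth_sp //; apply; rewrite size_sp; lia.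
Qed.

Lemma ext_facts t : t.+1 < size s ->
  (E sv[t] sv[t.+1] -> dist sv[t] sv[t.+1] = beta E) /\
  (~~ E sv[t] sv[t.+1] -> nonedge E sv[t] sv[t.+1] /\ dist sv[t] sv[t.+1] = alpha E).
Proof.
move=> /ext_t; rewrite /extreme /longest_edge /shortest_nonedge /nonedge.
case/orP => [/andP[-> /eqP ->]|/andP[/and3P[h1 h2 h3] /eqP ->]]; first by split.
by rewrite (negbTE h2) h1 h3; split => // _; split.
Qed.

Lemma et_alt t : t.+2 < size s -> E sv[t.+1] sv[t.+2] = ~~ E sv[t] sv[t.+1].
Proof.
move=> h; case/and4P: Halt => _ _ _ Hs.
have := sorted_nth_rel (x0, x0) Hs (t := t) ltac:(rewrite size_sp; lia).
rewrite !nth_sp; try lia.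
rewrite /alt_step /=.
have [f1 f2] := ext_facts (t := t) ltac:(lia).
case e: (E sv[t] sv[t.+1]) => /=.
  by case/andP => /and3P[_ /negbTE -> _].
have [ne _] := f2 (negbT e); rewrite ne /=.
by move=> ->.
Qed.

Lemma et_par t : t.+1 < size s -> E sv[t] sv[t.+1] = E sv[0] sv[1] (+) odd t.
Proof.
elim: t => [|t IH] h; first by rewrite addbF.
rewrite et_alt // IH; last lia.
by rewrite /= addbN.
Qed.

Lemma key a b : a < b -> b.+1 < size s ->
  (sv[a] = sv[b] \/ sv[a.+1] = sv[b.+1]) -> False.
Proof.
move=> hab hb hv.
have ha : a.+1 < size s by lia.
have [fa1 fa2] := ext_facts ha.
have [fb1 fb2] := ext_facts hb.
have Pab : (sv[a] = sv[b] /\ sv[a.+1] = sv[b.+1]) -> False.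
  case=> e1 e2.
  case/and4P: Halt => _ _ Hu _.
  have ha' : a < size (seq_pairs s) by rewrite size_sp; lia.
  have hb' : b < size (seq_pairs s) by rewrite size_sp; lia.
  have := nth_uniq (x0, x0) ha' hb' Hu.
  rewrite !nth_sp // e1 e2 eqxx => /esym /eqP; lia.
have pa := et_par ha; have pb := et_par hb.
have hab0 : 0 < alpha E < beta E by rewrite Hab (alpha_pos E x0).
case: (boolP (odd a == odd b)) => hp.
  have eq : E sv[a] sv[a.+1] = E sv[b] sv[b.+1] by rewrite pa pb (eqP hp).
  apply: Pab; case: hv => e.
    split => //; apply: (@dist_inj_r _ sv[a]); rewrite {2}e.
    case ea: (E sv[a] sv[a.+1]).
      by rewrite fa1 // fb1 // -eq.
    by rewrite (fa2 (negbT ea)).2 (fb2 _).2 // -eq ea.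
  split => //; apply: (@dist_inj_l _ _ sv[a.+1]); rewrite {2}e.
  case ea: (E sv[a] sv[a.+1]).
    by rewrite fa1 // fb1 // -eq.
  by rewrite (fa2 (negbT ea)).2 (fb2 _).2 // -eq ea.
have eq : E sv[b] sv[b.+1] = ~~ E sv[a] sv[a.+1].
  rewrite pa pb; move: hp; case: (odd a); case: (odd b) => //= _; by rewrite ?addbT ?addbF ?negbK.
case: hv => e.
  case ea: (E sv[a] sv[a.+1]).
    have nb : ~~ E sv[b] sv[b.+1] by rewrite eq ea.
    have [ne db] := fb2 nb.
    apply: (factT Hci ea (x := sv[b.+1])); rewrite e //.
    by rewrite db -e fa1.
  have eb : E sv[b] sv[b.+1] by rewrite eq ea.
  have [ne da] := fa2 (negbT ea).
  apply: (factT Hci eb (x := sv[a.+1])); rewrite -e //.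
  by rewrite da e fb1.
case ea: (E sv[a] sv[a.+1]).
  have nb : ~~ E sv[b] sv[b.+1] by rewrite eq ea.
  have [ne db] := fb2 nb.
  apply: (factH Hci ea (y := sv[b])); rewrite e //.
  by rewrite db -e fa1.
have eb : E sv[b] sv[b.+1] by rewrite eq ea.
have [ne da] := fa2 (negbT ea).
apply: (factH Hci eb (y := sv[a])); rewrite -e //.
by rewrite da e fb1.
Qed.
End Key.

Theorem mainTheorem13 (n : nat) (E : rel 'I_n) (s : seq 'I_n) :
  4 <= n -> optimal E -> alpha E < beta E -> augmenting E s ->
  forall (x0 : 'I_n) (i j : nat), i < j < size s ->
    ~~ ((i == 0) && (j == (size s).-1)) ->
    nth x0 s i != nth x0 s j.
Proof.
move=> _ [[_ _ Hci] _ _] Hab [Halt _ _] x0 i j /andP[hij hj] hn.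
apply/eqP => e.
case: (ltnP j.+1 (size s)) => h.
  exact: (key Hci Hab Halt hij h (or_introl e)).
case: i hij hn e => [|i] hij hn e.
  by move: hn; rewrite eqxx /= => /eqP; lia.
have ej : j = (j.-1).+1 by lia.
rewrite ej in e.
apply: (key Hci Hab Halt (a := i) (b := j.-1) _ _ (or_intror e)); lia.
Qed.
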